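(* Let $G$ be a group and $R,L,S\subseteq G$ with $R=R^{-1}$, $L=L^{-1}$, $|R|=|L|$, and such that no element of $R\cup L$ is equal to its own inverse. If the bi-Cayley graph $\mathrm{Bi}(G,R,L,S)$ is connected, then it admits a partite presentation with exactly two vertex classes, i.e. $\mathrm{Bi}(G,R,L,S)\cong\mathrm{PCay}(P)$ for a partite presentation $P$ with $|X|=2$.
   Context: $\mathrm{Bi}(G,R,L,S)$ has vertex set $\{(g)_0,(g)_1: g\in G\}$ and edges $\{(g)_0,(gr)_0\}$ ($g\in G,r\in R$), $\{(g)_1,(gl)_1\}$ ($g\in G,l\in L$), and $\{(g)_0,(gs)_1\}$ ($g\in G, s\in S$). A partite presentation $P=\langle X\mid U\mid I\mid \phi\mid \mathcal R\rangle$ consists of: a nonempty set $X$; disjoint sets $U$, $I$ with $S':=U\cup I$; the group $MF_P:=\langle S'\mid s^2\ (s\in I)\rangle$; a map $\phi:S'\to\mathrm{Sym}(X)$ such that $\phi(s)$ is a fixed-point-free involution for each $s\in I$ and the $\phi(s)$ generate a subgroup acting transitively on $X$; and for each $x\in X$ a set $\mathcal R_x\subseteq MF_P$ of words $s_1\cdots s_n$ ($s_i\in S'\cup S'^{-1}$, $\phi(s^{-1}):=\phi(s)^{-1}$) with $\phi(s_n)\circ\cdots\circ\phi(s_1)(x)=x$. The presentation graph $C(P)$ has vertex set $X$; for each $s\in U$ and $x\in X$ one edge from $x$ to $\phi(s)(x)$, its orientation from $x$ to $\phi(s)(x)$ labelled $s$ and reverse labelled $s^{-1}$; for each $s\in I$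 and each pair $\{x,\phi(s)(x)\}$ one edge with both orientations labelled $s$. The presentation complex $\mathcal C(P)$ is $C(P)$ with, for every $x\in X$ and $r=s_1\cdots s_n\in\mathcal R_x$, a 2-cell attached along the closed walk from $x$ successively traversing the outgoing edges labelled $s_1,\dots,s_n$. $\mathrm{PCay}(P)$ is the 1-skeleton of the universal cover of $\mathcal C(P)$. *)

(* Defs.v *)
From Stdlib Require Import List Relations.
Import ListNotations.

Definition is_group {G : Type} (mul : G -> G -> G) (one : G) (inv : G -> G) : Prop :=
  (forall a b c, mul a (mul b c) = mul (mul a b) c) /\
  (forall a, mul one a = a) /\ (forall a, mul a one = a) /\
  (forall a, mul (inv a) a = one) /\ (forall a, mul a (inv a) = one).

Definition equipotent {T : Type} (A B : T -> Prop) : Prop :=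
  exists (f : {x | A x} -> {x | B x}) (g : {x | B x} -> {x | A x}),
    (forall x, g (f x) = x) /\ (forall y, f (g y) = y).

(* vertex (g, false) = (g)_0 ; vertex (g, true) = (g)_1 ; adjacency = {v,w} is an edge *)
Definition bi_adj {G : Type} (mul : G -> G -> G) (R L S : G -> Prop)
  (v w : G * bool) : Prop :=
  (exists g r, R r /\ ((v = (g, false) /\ w = (mul g r, false)) \/
                       (v = (mul g r, false) /\ w = (g, false)))) \/
  (exists g l, L l /\ ((v = (g, true) /\ w = (mul g l, true)) \/
                       (v = (mul g l, true) /\ w = (g, true)))) \/
  (exists g s, S s /\ ((v = (g, false) /\ w = (mul g s, true)) \/
                       (v = (mul g s, true) /\ w = (g, false)))).

Definition bi_connected {G : Type} (mul : G -> G -> G) (R L S : G -> Prop) : Prop :=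
  forall v w : G * bool, clos_refl_trans _ (bi_adj mul R L S) v w.

(* Letters of words in S' ∪ S'^{-1}: a generator of U with a sign (true = s, false = s^{-1}),
   or a generator of I (s^{-1} = s in MF_P). *)
Inductive letter (U I : Type) : Type :=
| LU : U -> bool -> letter U I
| LI : I -> letter U I.
Arguments LU {U I}.
Arguments LI {U I}.

Definition linv {U I : Type} (l : letter U I) : letter U I :=
  match l with LU u b => LU u (negb b) | LI i => LI i end.

(* Data of a presentation  <X | U | I | phi | R>.  phi(s) for s in U is given as a
   bijection phiU s together with its inverse phiUinv s. Relators R_x are given by words. *)
Record ppres := {
  pX : Type;
  pU : Type;
  pI : Type;
  phiU : pU -> pX -> pX;
  phiUinv : pU -> pX -> pX;
  phiI : pI -> pX -> pX;
  rels : pX -> list (letter pU pI) -> Prop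
}.

Definition step (P : ppres) (x : pX P) (l : letter (pU P) (pI P)) : pX P :=
  match l with
  | LU u true => phiU P u x
  | LU u false => phiUinv P u x
  | LI i => phiI P i x
  end.

(* act x [s1;...;sn] = phi(sn) o ... o phi(s1) (x) = endpoint of the walk from x *)
Fixpoint act (P : ppres) (x : pX P) (w : list (letter (pU P) (pI P))) : pX P :=
  match w with
  | [] => x
  | l :: w' => act P (step P x l) w'
  end.

Definition partite_presentation (P : ppres) : Prop :=
  inhabited (pX P) /\
  (forall u x, phiUinv P u (phiU P u x) = x) /\
  (forall u x, phiU P u (phiUinv P u x) = x) /\
  (forall i x, phiI P i (phiI P i x) = x) /\
  (forall i x, phiI P i x <> x) /\
  (forall x y, exists w, act P x w = y) /\
  (forall x r, rels P x r -> act P x r = x).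

(* ---------- PCay(P): 1-skeleton of the universal cover of the presentation complex ----------
   Vertices of the universal cover (based at x0) are walks from x0 in C(P) (= words,
   since each vertex has exactly one outgoing edge with each label) modulo homotopy:
   removing a backtrack l l^{-1}, and removing a relator loop r in R_y at a point where
   the walk is at y; plus symmetric/transitive closure. *)
Inductive hstep (P : ppres) (x0 : pX P) :
  list (letter (pU P) (pI P)) -> list (letter (pU P) (pI P)) -> Prop :=
| hs_back : forall u v l, hstep P x0 (u ++ l :: linv l :: v) (u ++ v)
| hs_rel : forall u r v, rels P (act P x0 u) r -> hstep P x0 (u ++ r ++ v) (u ++ v).

Definition hequiv (P : ppres) (x0 : pX P) :=
  clos_refl_sym_trans _ (hstep P x0).

Definition pcay_adj (P : ppres) (x0 : pX P) (w v : list (letter (pU P) (pI P))) : Prop :=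
  exists l, hequiv P x0 (w ++ [l]) v.

(* PCay(P) has no loops and no parallel edges: the distinct oriented edges leaving a
   vertex [w] (one per letter) lead to pairwise distinct vertices different from [w]. *)
Definition pcay_simple (P : ppres) (x0 : pX P) : Prop :=
  (forall w l, ~ hequiv P x0 (w ++ [l]) w) /\
  (forall w l l', l <> l' -> ~ hequiv P x0 (w ++ [l]) (w ++ [l'])).

(* graph isomorphism Bi(G,R,L,S) ~= PCay(P) (vertices of PCay are hequiv-classes) *)
Definition bi_iso_pcay {G : Type} (mul : G -> G -> G) (R L S : G -> Prop)
  (P : ppres) (x0 : pX P) : Prop :=
  exists f : G * bool -> list (letter (pU P) (pI P)),
    (forall w, exists v, hequiv P x0 (f v) w) /\
    (forall v v', hequiv P x0 (f v) (f v') -> v = v') /\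
    (forall v v', bi_adj mul R L S v v' <-> pcay_adj P x0 (f v) (f v')).

Definition has_two_elements (X : Type) : Prop :=
  exists a b : X, a <> b /\ forall x, x = a \/ x = b.

(* Main.v *)
Require Import Defs.
From Stdlib Require Import List Relations Classical ClassicalEpsilon FunctionalExtensionality PropExtensionality Arith Lia.
Import ListNotations.

Lemma iter_pi_ne (V : Type) (s t : V -> V) (Hs: forall v, s (s v) = v) (Ht : forall v, t (t v) = v)
  (Hsf : forall v, s v <> v) (Htf: forall v, t v <> v) :
  forall n v, Nat.iter n (fun x => t (s x)) v <> s v.
Proof.
  assert (H : forall n, (forall v, Nat.iter n (fun x => t (s x)) v <> s v) /\
                        (forall v, Nat.iter (S n) (fun x => t (s x)) v <> s v)).
  { induction n as [|n [IH1 IH2]].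
    - split; intros v; simpl.
      + intro E. apply (Hsf v). auto.
      + apply Htf.
    - split; [exact IH2|].
      intros v E.
      rewrite Nat.iter_succ_r in E.
      set (u := t (s v)) in *.
      assert (Hv : s v = t u) by (unfold u; rewrite Ht; reflexivity).
      rewrite Hv in E. simpl in E.
      assert (E2 : Nat.iter n (fun x => t (s x)) u = s u).
      { apply (f_equal t) in E. rewrite !Ht in E. apply (f_equal s) in E. rewrite Hs in E.
        exact E. }
      exact (IH1 u E2). }
  intro n. apply H.
Qed.

Definition Qr {V : Type} (p : V -> V) (x y : V) :=
  exists n, Nat.iter n p x = y \/ Nat.iter n p y = x.

Lemma Qr_l1 (V : Type) (p : V -> V) (pinj : forall a b, p a = p b -> a = b) :
  forall n m a b, Nat.iter n p a = Nat.iter m p b -> Qr p a b.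
Proof.
  induction n as [|n IH]; intros m a b E.
  - exists m. right. simpl in E. auto.
  - destruct m as [|m].
    + exists (S n). left. auto.
    + simpl in E. apply pinj in E. eauto.
Qed.

Lemma Qr_l2 (V : Type) (p : V -> V) :
  forall a b y x z, Nat.iter a p y = x -> Nat.iter b p y = z -> Qr p x z.
Proof.
  induction a as [|a IH]; intros b y x z E1 E2.
  - simpl in E1. subst. exists b. left. auto.
  - destruct b as [|b].
    + simpl in E2. subst. exists (S a). right. auto.
    + rewrite Nat.iter_succ_r in E1, E2. eauto.
Qed.

Lemma Cp_Qr (V : Type) (p : V -> V) (pinj : forall a b, p a = p b -> a = b) :
  forall x y, clos_refl_sym_trans V (fun a b => b = p a) x y -> Qr p x y.
Proof.
  intros x y H. induction H.
  - exists 1. left. simpl. auto.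
  - exists 0. left. reflexivity.
  - destruct IHclos_refl_sym_trans as [n [E|E]]; exists n; auto.
  - destruct IHclos_refl_sym_trans1 as [a [E1|E1]];
    destruct IHclos_refl_sym_trans2 as [b [E2|E2]].
    + exists (b + a). left. rewrite Nat.iter_add. congruence.
    + apply (Qr_l1 V p pinj a b). congruence.
    + eapply Qr_l2; eauto.
    + exists (a + b). right. rewrite Nat.iter_add. congruence.
Qed.

Lemma orient (V : Type) (s t : V -> V) (Hs: forall v, s (s v) = v) (Ht : forall v, t (t v) = v)
  (Hsf : forall v, s v <> v) (Htf: forall v, t v <> v) :
  exists F : V -> Prop, (forall v, F v <-> F (t (s v))) /\ (forall v, F v <-> ~ F (s v)).
Proof.
  set (p := fun x => t (s x)).
  assert (pinj : forall a b, p a = p b -> a = b).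
  { unfold p; intros a b E. apply (f_equal t) in E. rewrite !Ht in E.
    apply (f_equal s) in E. rewrite !Hs in E. exact E. }
  set (Cp := clos_refl_sym_trans V (fun a b => b = p a)).
  assert (key : forall x, ~ Cp x (s x)).
  { intros x H. apply Cp_Qr in H; auto. destruct H as [n [E|E]].
    - exact (iter_pi_ne V s t Hs Ht Hsf Htf n x E).
    - apply (iter_pi_ne V s t Hs Ht Hsf Htf n (s x)). rewrite Hs. exact E. }
  assert (Cps : forall a b, Cp a b -> Cp b a) by (intros; apply rst_sym; auto).
  assert (Cpt : forall a b c, Cp a b -> Cp b c -> Cp a c) by (intros; eapply rst_trans; eauto).
  assert (Cpp : forall a, Cp a (p a)) by (intros; apply rst_step; auto).
  assert (Cpsig : forall a b, Cp a b -> Cp (s a) (s b)).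
  { intros a b H. induction H.
    - subst y. apply Cps.
      assert (E : p (s (p x)) = s x) by (unfold p; rewrite Hs, Ht; reflexivity).
      rewrite <- E at 1. apply Cpp.
    - apply rst_refl.
    - auto.
    - eauto. }
  set (C := clos_refl_sym_trans V (fun a b => b = p a \/ b = s a)).
  assert (CD : forall v w, C v w -> Cp v w \/ Cp v (s w)).
  { intros v w H. induction H.
    - destruct H as [H|H]; subst y.
      + left. apply Cpp.
      + right. rewrite Hs. apply rst_refl.
    - left. apply rst_refl.
    - destruct IHclos_refl_sym_trans as [H1|H1].
      + left. auto.
      + right. apply Cpsig in H1. rewrite Hs in H1. auto.
    - destruct IHclos_refl_sym_trans1 as [H1|H1];
      destruct IHclos_refl_sym_trans2 as [H2|H2].
      + left; eauto.
      + right; eauto.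
      + right. apply Cpsig in H2. eauto.
      + left. apply Cpsig in H2. rewrite Hs in H2. eauto. }
  assert (Ceq : forall v w, C v w -> C v = C w).
  { intros v w H. apply functional_extensionality. intro x.
    apply propositional_extensionality. split; intro H2.
    - eapply rst_trans; [apply rst_sym; exact H| exact H2].
    - eapply rst_trans; eauto. }
  set (rep := fun v => epsilon (inhabits v) (C v)).
  assert (repC : forall v, C v (rep v)).
  { intro v. unfold rep. apply epsilon_spec. exists v. apply rst_refl. }
  assert (repeq : forall v w, C v w -> rep v = rep w).
  { intros v w H. unfold rep. rewrite (Ceq v w H).
    rewrite (proof_irrelevance _ (inhabits v) (inhabits w)). reflexivity. }
  exists (fun v => Cp (rep v) v).
  split.
  - intro v. rewrite (repeq v (t (s v))) by (apply rst_step; left; reflexivity).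
    fold (p v). split; intro H.
    + eauto.
    + eapply Cpt; [exact H|]. apply Cps, Cpp.
  - intro v. rewrite <- (repeq v (s v)) by (apply rst_step; right; reflexivity).
    destruct (CD _ _ (repC v)) as [H|H].
    + split; intro H1.
      * intro H2. apply (key v). eauto.
      * apply Cps. exact H.
    + assert (H' : Cp (rep v) (s v)).
      { apply Cpsig in H. rewrite Hs in H. apply Cps. exact H. }
      split; intro H1.
      * exfalso. apply (key (s v)). rewrite Hs. eauto.
      * exfalso. exact (H1 H').
Qed.

Lemma subset_eq {T : Type} {P : T -> Prop} (a b : {x | P x}) : proj1_sig a = proj1_sig b -> a = b.
Proof.
  destruct a as [a Ha], b as [b Hb]; simpl; intro E; subst.
  rewrite (proof_irrelevance _ Ha Hb). reflexivity.
Qed.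

Lemma inv_inv {G} (mul : G -> G -> G) one inv (HG : is_group mul one inv) a : inv (inv a) = a.
Proof.
  destruct HG as [As [l1 [r1 [li ri]]]].
  rewrite <- (r1 (inv (inv a))). rewrite <- (li a). rewrite As. rewrite li. apply l1.
Qed.

Lemma pairing (G : Type) (mul : G -> G -> G) (one : G) (inv : G -> G)
  (HG : is_group mul one inv) (R L : G -> Prop)
  (HR : forall g, R (inv g) <-> R g)
  (HL : forall g, L (inv g) <-> L g)
  (HRL : equipotent R L)
  (Hnoinv : forall g, R g \/ L g -> inv g <> g) :
  exists (U : Type) (rho lam : U -> G),
    (forall t, R (rho t)) /\ (forall t, L (lam t)) /\
    (forall r, R r -> exists t, r = rho t \/ r = inv (rho t)) /\
    (forall l, L l -> exists t, l = lam t \/ l = inv (lam t)) /\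
    (forall t t', rho t = rho t' -> t = t') /\ (forall t t', rho t <> inv (rho t')) /\
    (forall t t', lam t = lam t' -> t = t') /\ (forall t t', lam t <> inv (lam t')).
Proof.
  destruct HRL as [f [g [gf fg]]].
  pose proof (inv_inv mul one inv HG) as II.
  set (invR := fun x : {x | R x} => exist R (inv (proj1_sig x)) (proj2 (HR _) (proj2_sig x))).
  set (invL := fun x : {x | L x} => exist L (inv (proj1_sig x)) (proj2 (HL _) (proj2_sig x))).
  assert (IR : forall x, invR (invR x) = x) by (intro; apply subset_eq; simpl; apply II).
  assert (IL : forall x, invL (invL x) = x) by (intro; apply subset_eq; simpl; apply II).
  set (V := ({x | R x} + {x | L x})%type).
  set (s := fun v : V => match v with inl x => inl (invR x) | inr y => inr (invL y) end : V).
  set (t := fun v : V => match v with inl x => inr (f x) | inr y => inl (g y) end : V).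
  assert (Hs : forall v, s (s v) = v) by (intros [x|y]; simpl; rewrite ?IR, ?IL, ?fg, ?gf; reflexivity).
  assert (Ht : forall v, t (t v) = v) by (intros [x|y]; simpl; rewrite ?IR, ?IL, ?fg, ?gf; reflexivity).
  assert (Hsf : forall v, s v <> v).
  { intros [[x Hx]|[y Hy]] E; simpl in E; injection E; intro E'.
    - apply (Hnoinv x); auto.
    - apply (Hnoinv y); auto. }
  assert (Htf : forall v, t v <> v) by (intros [x|y]; simpl; discriminate).
  destruct (orient V s t Hs Ht Hsf Htf) as [F [F1 F2]].
  assert (F3 : forall v, ~ F v -> F (s v)).
  { intros v H. apply NNPP. intro H2. apply H. apply F2. exact H2. }
  exists {x : {x | R x} | F (inl x)}.
  exists (fun u => proj1_sig (proj1_sig u)).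
  exists (fun u => proj1_sig (f (invR (proj1_sig u)))).
  assert (Lsurj : forall y, F (inr y) -> exists u : {x : {x | R x} | F (inl x)},
             proj1_sig (f (invR (proj1_sig u))) = proj1_sig y).
  { intros y Hy. set (x := invR (g y)).
    assert (Hx : F (inl x)).
    { apply F1. simpl. unfold x. rewrite IR, fg. exact Hy. }
    exists (exist _ x Hx). simpl. unfold x. rewrite IR, fg. reflexivity. }
  repeat split.
  - intro u. exact (proj2_sig (proj1_sig u)).
  - intro u. exact (proj2_sig (f _)).
  - intros r Hr. set (x := exist R r Hr).
    destruct (classic (F (inl x))) as [H|H].
    + exists (exist _ x H). left. reflexivity.
    + apply F3 in H. exists (exist _ (invR x) H). right. simpl. rewrite II. reflexivity.
  - intros l Hl. set (y := exist L l Hl).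
    destruct (classic (F (inr y))) as [H|H].
    + destruct (Lsurj y H) as [u Hu]. exists u. left. rewrite Hu. reflexivity.
    + apply F3 in H. destruct (Lsurj _ H) as [u Hu]. exists u. right. rewrite Hu. simpl.
      rewrite II. reflexivity.
  - intros [x Hx] [x' Hx'] E. simpl in E. apply subset_eq. apply subset_eq. exact E.
  - intros [x Hx] [x' Hx'] E. simpl in E.
    assert (E2 : x = invR x') by (apply subset_eq; exact E).
    subst x. apply F2 in Hx'. apply Hx'. exact Hx.
  - intros [x Hx] [x' Hx'] E. simpl in E. apply subset_eq; simpl.
    apply subset_eq in E. apply (f_equal g) in E. rewrite !gf in E.
    apply (f_equal invR) in E. rewrite !IR in E. exact E.
  - intros [x Hx] [x' Hx'] E. simpl in E.
    assert (E2 : f (invR x) = invL (f (invR x'))) by (apply subset_eq; exact E).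
    apply F1 in Hx. apply F1 in Hx'. simpl in Hx, Hx'.
    apply F2 in Hx'. apply Hx'. simpl. rewrite <- E2. exact Hx.
Qed.

Section Main.
Variables (G : Type) (mul : G -> G -> G) (one : G) (inv : G -> G).
Hypothesis HG : is_group mul one inv.
Variables (R L S : G -> Prop) (U : Type) (rho lam : U -> G).
Hypotheses (HR : forall g, R (inv g) <-> R g) (HL : forall g, L (inv g) <-> L g)
  (Hnoinv : forall g, R g \/ L g -> inv g <> g)
  (Hrho : forall t, R (rho t)) (Hlam : forall t, L (lam t))
  (Rcov : forall r, R r -> exists t, r = rho t \/ r = inv (rho t))
  (Lcov : forall l, L l -> exists t, l = lam t \/ l = inv (lam t))
  (rinj : forall t t', rho t = rho t' -> t = t') (rninv : forall t t', rho t <> inv (rho t'))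
  (linj : forall t t', lam t = lam t' -> t = t') (lninv : forall t t', lam t <> inv (lam t')).

Definition SI := {s | S s}.

Definition elt (b : bool) (l : letter U SI) : G :=
  match b, l with
  | false, LU t true => rho t
  | false, LU t false => inv (rho t)
  | true, LU t true => lam t
  | true, LU t false => inv (lam t)
  | false, LI s => proj1_sig s
  | true, LI s => inv (proj1_sig s)
  end.

Definition side (b : bool) (l : letter U SI) : bool :=
  match l with LU _ _ => b | LI _ => negb b end.

Definition stepB (v : G * bool) (l : letter U SI) : G * bool :=
  (mul (fst v) (elt (snd v) l), side (snd v) l).

Definition walkB (v : G * bool) (w : list (letter U SI)) := fold_left stepB w v.

Definition PP : ppres := {| pX := bool; pU := U; pI := SI;
  phiU := fun _ x => x; phiUinv := fun _ x => x; phiI := fun _ x => negb x;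
  rels := fun x r => walkB (one, x) r = (one, x) |}.

Let As : forall a b c, mul a (mul b c) = mul (mul a b) c.
Proof. apply HG. Qed.
Let l1 : forall a, mul one a = a.
Proof. apply HG. Qed.
Let r1 : forall a, mul a one = a.
Proof. apply HG. Qed.
Let li : forall a, mul (inv a) a = one.
Proof. apply HG. Qed.
Let ri : forall a, mul a (inv a) = one.
Proof. apply HG. Qed.
Let II := inv_inv mul one inv HG.

Lemma cancel_l g a b : mul g a = mul g b -> a = b.
Proof.
  intro E. apply (f_equal (mul (inv g))) in E. rewrite !As, li, !l1 in E. exact E.
Qed.

Lemma walkB_app v w1 w2 : walkB v (w1 ++ w2) = walkB (walkB v w1) w2.
Proof. unfold walkB. apply fold_left_app. Qed.

Lemma walkB_transl h g b w :
  walkB (mul h g, b) w = (mul h (fst (walkB (g, b) w)), snd (walkB (g, b) w)).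
Proof.
  revert g b. induction w as [|l w IH]; intros g b; simpl.
  - reflexivity.
  - unfold walkB in *. cbn [fold_left].
    assert (E : stepB (mul h g, b) l = (mul h (mul g (elt b l)), side b l))
      by (unfold stepB; simpl; rewrite As; reflexivity).
    rewrite E. apply IH.
Qed.

Lemma walkB_one g b w :
  walkB (g, b) w = (mul g (fst (walkB (one, b) w)), snd (walkB (one, b) w)).
Proof. rewrite <- walkB_transl, r1. reflexivity. Qed.

Lemma act_walk (x0 : bool) w g : act PP x0 w = snd (walkB (g, x0) w).
Proof.
  revert x0 g. induction w as [|l w IH]; intros x0 g; simpl.
  - reflexivity.
  - unfold walkB in *. simpl. rewrite (IH _ (mul g (elt x0 l))). unfold stepB. simpl.
    f_equal. f_equal. destruct l as [u [|]|i]; reflexivity.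
Qed.

Lemma back b l : mul (elt b l) (elt (side b l) (linv l)) = one /\ side (side b l) (linv l) = b.
Proof.
  destruct b, l as [u [|]|i]; simpl; split; auto using Bool.negb_involutive;
  rewrite ?II; auto.
Qed.

Lemma stepB_back v l : stepB (stepB v l) (linv l) = v.
Proof.
  destruct v as [g b]. unfold stepB; simpl. destruct (back b l) as [E1 E2].
  rewrite <- As, E1, r1, E2. reflexivity.
Qed.

Definition winv (w : list (letter U SI)) := rev (map linv w).

Lemma walkB_winv v w : walkB (walkB v w) (winv w) = v.
Proof.
  revert v. induction w as [|l w IH] using rev_ind; intro v.
  - reflexivity.
  - unfold winv. rewrite map_app, rev_app_distr. simpl.
    rewrite walkB_app. unfold walkB at 2 3. simpl. fold (walkB v w).
    rewrite stepB_back. apply IH.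
Qed.

Lemma hstep_walk (x0 : bool) a b : hstep PP x0 a b -> walkB (one, x0) a = walkB (one, x0) b.
Proof.
  intro H. destruct H as [u v l|u r v Hr].
  - rewrite !walkB_app. unfold walkB at 2 4. simpl. fold (walkB (walkB (one,x0) u) v).
    rewrite stepB_back. reflexivity.
  - rewrite !walkB_app. f_equal. simpl in Hr.
    destruct (walkB (one, x0) u) as [g b] eqn:E.
    assert (Eb : act PP x0 u = b) by (rewrite (act_walk x0 u one), E; reflexivity).
    rewrite Eb in Hr. rewrite walkB_one, Hr. simpl. rewrite r1. reflexivity.
Qed.

Lemma hequiv_walk (x0 : bool) a b : hequiv PP x0 a b -> walkB (one, x0) a = walkB (one, x0) b.
Proof.
  intro H. induction H.
  - apply hstep_walk; auto.
  - reflexivity.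
  - congruence.
  - congruence.
Qed.

Lemma hequiv_cancel (x0 : bool) w v : hequiv PP x0 (w ++ winv w ++ v) v.
Proof.
  revert v. induction w as [|l w IH] using rev_ind; intro v.
  - apply rst_refl.
  - unfold winv. rewrite map_app, rev_app_distr. simpl.
    eapply rst_trans; [|apply (IH v)].
    apply rst_step. rewrite <- app_assoc. simpl. apply hs_back.
Qed.

Lemma walk_hequiv (x0 : bool) a b : walkB (one, x0) a = walkB (one, x0) b -> hequiv PP x0 a b.
Proof.
  intro E.
  assert (H1 : hstep PP x0 (a ++ (winv a ++ b) ++ []) (a ++ [])).
  { apply hs_rel. change (walkB (@pair G bool one (act PP x0 a)) (winv a ++ b) = @pair G bool one (act PP x0 a)).
    destruct (walkB (one, x0) a) as [g c] eqn:Ea.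
    assert (Ec : act PP x0 a = c) by (rewrite (act_walk x0 a one), Ea; reflexivity).
    rewrite Ec.
    assert (W : walkB (g, c) (winv a ++ b) = (g, c)).
    { rewrite walkB_app, <- Ea, walkB_winv. congruence. }
    rewrite walkB_one in W. injection W; intros W2 W1.
    rewrite <- (r1 g) in W1 at 2. apply cancel_l in W1.
    destruct (walkB (one, c) (winv a ++ b)) as [k d]. simpl in *. congruence. }
  rewrite !app_nil_r in H1.
  eapply rst_trans; [apply rst_sym, rst_step, H1|]. apply hequiv_cancel.
Qed.


Lemma walkB_snoc v w l : walkB v (w ++ [l]) = stepB (walkB v w) l.
Proof. rewrite walkB_app. reflexivity. Qed.

Lemma A2 v l : bi_adj mul R L S v (stepB v l).
Proof.
  destruct v as [g b]. unfold stepB; simpl.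
  destruct b, l as [t [|]|[s Hs]]; simpl.
  - right; left. exists g, (lam t). split; auto.
  - right; left. exists g, (inv (lam t)). split; [apply HL; auto| left; auto].
  - right; right. exists (mul g (inv s)), s. split; auto. right. split; auto.
    f_equal. rewrite <- As, li, r1. reflexivity.
  - left. exists g, (rho t). split; auto.
  - left. exists g, (inv (rho t)). split; [apply HR; auto| left; auto].
  - right; right. exists g, s. split; auto.
Qed.

Lemma ER a : R a -> exists l, elt false l = a /\ side false l = false.
Proof.
  intro H. destruct (Rcov a H) as [t [E|E]].
  - exists (LU t true). simpl. auto.
  - exists (LU t false). simpl. auto.
Qed.

Lemma EL a : L a -> exists l, elt true l = a /\ side true l = true.
Proof.
  intro H. destruct (Lcov a H) as [t [E|E]].
  - exists (LU t true). simpl. auto.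
  - exists (LU t false). simpl. auto.
Qed.

Lemma A1 v v' : bi_adj mul R L S v v' -> exists l, stepB v l = v'.
Proof.
  intros [[g [r [Hr [[-> ->]|[-> ->]]]]]|[[g [r [Hr [[-> ->]|[-> ->]]]]]|[g [r [Hr [[-> ->]|[-> ->]]]]]]].
  - destruct (ER r Hr) as [l [E1 E2]]. exists l. unfold stepB. cbn [fst snd]. rewrite E1, E2. auto.
  - destruct (ER (inv r)) as [l [E1 E2]]; [apply HR; auto|].
    exists l. unfold stepB. cbn [fst snd]. rewrite E1, E2, <- As, ri, r1. auto.
  - destruct (EL r Hr) as [l [E1 E2]]. exists l. unfold stepB. cbn [fst snd]. rewrite E1, E2. auto.
  - destruct (EL (inv r)) as [l [E1 E2]]; [apply HL; auto|].
    exists l. unfold stepB. cbn [fst snd]. rewrite E1, E2, <- As, ri, r1. auto.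
  - exists (LI (exist _ r Hr)). unfold stepB. cbn [fst snd]. auto.
  - exists (LI (exist _ r Hr)). unfold stepB. cbn [fst snd]. rewrite <- As, ri, r1. auto.
Qed.

Lemma notone a : R a \/ L a -> a <> one.
Proof.
  intros H E. subst. apply (Hnoinv one H). rewrite <- (l1 (inv one)). apply ri.
Qed.

Lemma simple1 v l : stepB v l <> v.
Proof.
  destruct v as [g b]. unfold stepB; simpl. intro E. injection E as Eg Eb.
  rewrite <- (r1 g) in Eg at 2. apply cancel_l in Eg.
  destruct b, l as [t [|]|s]; simpl in *; try discriminate; revert Eg; apply notone.
  - right; auto.
  - right; apply HL; auto.
  - left; auto.
  - left; apply HR; auto.
Qed.

Lemma simple2 v l l' : l <> l' -> stepB v l <> stepB v l'.
Proof.
  intros Hne E. destruct v as [g b]. unfold stepB in E; simpl in E. injection E as Eg Eb.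
  apply cancel_l in Eg.
  destruct b, l as [t [|]|s], l' as [t' [|]|s']; simpl in *; try discriminate;
  try (apply (f_equal inv) in Eg; rewrite !II in Eg);
  try (apply rinj in Eg; subst; congruence);
  try (apply linj in Eg; subst; congruence);
  try (apply subset_eq in Eg; subst; congruence);
  try (exact (rninv _ _ Eg)); try (exact (rninv _ _ (eq_sym Eg)));
  try (exact (lninv _ _ Eg)); try (exact (lninv _ _ (eq_sym Eg))).
Qed.

Lemma PP_pp (s0 : G) : S s0 -> partite_presentation PP.
Proof.
  intro Hs0. split; [exact (inhabits true)|].
  split; [reflexivity|]. split; [reflexivity|].
  split; [|split; [|split]].
  - intros i x. apply Bool.negb_involutive.
  - intros i x. destruct x; discriminate.
  - intros x y. destruct (Bool.bool_dec x y) as [E|E].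
    + exists []. auto.
    + exists [LI (exist _ s0 Hs0)]. simpl. destruct x, y; simpl; congruence.
  - intros x r H. rewrite (act_walk x r one). simpl in H. rewrite H. reflexivity.
Qed.

End Main.

Lemma S_nonempty {G} (mul : G -> G -> G) R L S :
  forall v w, clos_refl_trans _ (bi_adj mul R L S) v w -> snd v <> snd w -> exists s, S s.
Proof.
  intros v w H. induction H; intro D.
  - destruct H as [[g [r [_ [[-> ->]|[-> ->]]]]]|[[g [r [_ [[-> ->]|[-> ->]]]]]|[g [r [Hr _]]]]];
    simpl in D; try congruence; eauto.
  - congruence.
  - destruct (Bool.bool_dec (snd x) (snd y)) as [E|E]; auto.
    apply IHclos_refl_trans2. congruence.
Qed.

Theorem proposition4 (G : Type) (mul : G -> G -> G) (one : G) (inv : G -> G)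
  (HG : is_group mul one inv) (R L S : G -> Prop)
  (HR : forall g, R (inv g) <-> R g)
  (HL : forall g, L (inv g) <-> L g)
  (HRL : equipotent R L)
  (Hnoinv : forall g, R g \/ L g -> inv g <> g)
  (Hconn : bi_connected mul R L S) :
  exists P : ppres,
    partite_presentation P /\ has_two_elements (pX P) /\
    forall x0 : pX P, pcay_simple P x0 /\ bi_iso_pcay mul R L S P x0.
Proof.
  destruct (pairing G mul one inv HG R L HR HL HRL Hnoinv)
    as [U [rho [lam [Hrho [Hlam [Rcov [Lcov [rinj [rninv [linj lninv]]]]]]]]]].
  destruct (S_nonempty mul R L S (one, false) (one, true) (Hconn _ _)) as [s0 Hs0];
    [simpl; discriminate|].
  exists (PP G mul one inv S U rho lam).
  split; [exact (PP_pp G mul one inv S U rho lam s0 Hs0)|].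
  split; [exists true, false; split; [discriminate| intros [|]; auto]|].
  intro x0. simpl in x0.
  assert (reach : forall v, exists w, walkB G mul inv S U rho lam (one, x0) w = v).
  { intro v. pose proof (clos_rt_rtn1 _ _ _ _ (Hconn (one, x0) v)) as H. induction H.
    - exists []. reflexivity.
    - destruct IHclos_refl_trans_n1 as [w Hw].
      destruct (A1 G mul one inv HG R L S U rho lam HR HL Rcov Lcov _ _ H) as [l Hl].
      exists (w ++ [l]). rewrite walkB_snoc, Hw. exact Hl. }
  split.
  - split.
    + intros w l H. apply hequiv_walk in H; auto. rewrite walkB_snoc in H.
      eapply (simple1 G mul one inv HG R L S U rho lam); eauto.
    + intros w l l' Hne H. apply hequiv_walk in H; auto. rewrite !walkB_snoc in H.
      eapply (simple2 G mul one inv HG S U rho lam); eauto.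
  - set (f := fun v => proj1_sig (constructive_indefinite_description _ (reach v))).
    assert (fs : forall v, walkB G mul inv S U rho lam (one, x0) (f v) = v).
    { intro v. unfold f. exact (proj2_sig (constructive_indefinite_description _ (reach v))). }
    exists f. split; [|split].
    + intro w. exists (walkB G mul inv S U rho lam (one, x0) w).
      apply walk_hequiv; auto; rewrite fs; reflexivity.
    + intros v v' H. apply hequiv_walk in H; auto. rewrite !fs in H. exact H.
    + intros v v'. split.
      * intro H. destruct (A1 G mul one inv HG R L S U rho lam HR HL Rcov Lcov _ _ H) as [l Hl].
        exists l. apply walk_hequiv; auto. rewrite walkB_snoc, !fs. exact Hl.
      * intros [l H]. apply hequiv_walk in H; auto. rewrite walkB_snoc, !fs in H.
        subst v'. eapply (A2 G mul one inv HG R L S U rho lam); eauto.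
Qed.
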